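(* Let $K$ be a field, $n\ge 1$, and $A_n(\tau_n)$ a quiver of type $A_n$ with arbitrary orientation. Let $$\Theta\colon \bigoplus_{1\le a\le b\le n}\mathbb{I}[a,b]^{m^1_{a,b}}\to \bigoplus_{1\le a\le b\le n}\mathbb{I}[a,b]^{m^2_{a,b}},\qquad \Psi\colon \bigoplus_{1\le a\le b\le n}\mathbb{I}[a,b]^{m^2_{a,b}}\to \bigoplus_{1\le a\le b\le n}\mathbb{I}[a,b]^{m^3_{a,b}}$$ be morphisms of representations of $A_n(\tau_n)$. Then for all $1\le a\le b\le n$, $$[\Psi\Theta]^{a:b}_{a:b}=\Psi^{a:b}_{a:b}\,\Theta^{a:b}_{a:b}.$$
   Context: The interval representation $\mathbb{I}[a,b]$ of $A_n(\tau_n)$ has $K$ at vertices $a,\dots,b$, $0$ elsewhere, identity maps on arrows between two vertices in $[a,b]$, and zero maps otherwise; $\mathbb{I}[a,b]^m$ is the direct sum of $m$ copies. For a morphism $\Phi\colon\bigoplus\mathbb{I}[a,b]^{m_{a,b}}\to\bigoplus\mathbb{I}[a,b]^{m'_{a,b}}$, its block $\Phi^{c:d}_{a:b}\colon\mathbb{I}[a,b]^{m_{a,b}}\to\mathbb{I}[c,d]^{m'_{c,d}}$ is $\pi_{c,d}\circ\Phi\circ\iota_{a,b}$, where $\iota_{a,b}$ is the canonical inclusion of the summand $\mathbb{I}[a,b]^{m_{a,b}}$ into the source and $\pi_{c,d}$ is the canonical projection of the target onto its summand $\mathbb{I}[c,d]^{m'_{c,d}}$. *)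

(* Defs.v *)
From HB Require Import structures.
From mathcomp Require Import all_boot all_order all_algebra.
Set Implicit Arguments. Unset Strict Implicit. Unset Printing Implicit Defensive.
Import GRing.Theory.
Local Open Scope ring_scope.

(* Vertices of A_n are the naturals 1..n.  The orientation tau_n is a
   function [tau : nat -> bool]: for 1 <= i < n, [tau i = true] means the
   arrow between i and i+1 is i -> i+1, and [false] means i+1 -> i. *)
Definition asrc (tau : nat -> bool) (i : nat) : nat := if tau i then i else i.+1.
Definition atgt (tau : nat -> bool) (i : nat) : nat := if tau i then i.+1 else i.

(* Summand index of  (+)_{1<=a<=b<=n} I[a,b]^{m a b} : a triple (a, b, k)
   with k < m a b.  Pairs with a = 0 or a > b never contribute (see [inside]). *)
Definition Idx (n : nat) (m : nat -> nat -> nat) : finType :=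
  {p : 'I_n.+1 * 'I_n.+1 & 'I_(m p.1 p.2)}.

Definition ida n m (x : Idx n m) : nat := (tag x).1.
Definition idb n m (x : Idx n m) : nat := (tag x).2.

(* The summand x (a copy of I[a,b]) is nonzero at vertex i iff a <= i <= b;
   so the space of the direct sum at vertex i is K^{ {x | inside i x} }. *)
Definition inside n m (i : nat) (x : Idx n m) : bool :=
  [&& (1 <= ida x)%N, (ida x <= i)%N & (i <= idb x)%N].

Definition mkIdx n (m : nat -> nat -> nat) (a b : 'I_n.+1) (k : 'I_(m a b)) : Idx n m :=
  @Tagged _ (a, b) (fun p => 'I_(m p.1 p.2)) k.
Arguments mkIdx {n m} a b k.

(* A family of linear maps between the direct sums: at vertex i, the matrix
   (row convention: basis vector x is sent to \sum_y Phi i x y * y), where only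
   entries with [inside i x] and [inside i y] are meaningful. *)
Definition DSmor (K : fieldType) (n : nat) (m m' : nat -> nat -> nat) :=
  nat -> Idx n m -> Idx n m' -> K.

(* Matrix of the structure map of the direct sum along an arrow:
   identity between vertices of a common interval summand, zero otherwise. *)
Definition dsArrow (K : fieldType) n m (x y : Idx n m) : K := (x == y)%:R.

Definition is_morphism (K : fieldType) (n : nat) (tau : nat -> bool)
    (m m' : nat -> nat -> nat) (Phi : DSmor K n m m') : Prop :=
  forall i : nat, (1 <= i)%N -> (i < n)%N ->
  forall (x : Idx n m) (z : Idx n m'),
    inside (asrc tau i) x -> inside (atgt tau i) z ->
    \sum_(y : Idx n m | inside (atgt tau i) y) dsArrow K x y * Phi (atgt tau i) y z
    = \sum_(y : Idx n m' | inside (asrc tau i) y) Phi (asrc tau i) x y * dsArrow K y z.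

(* Composition Psi o Theta (Theta applied first). *)
Definition mcomp (K : fieldType) n m1 m2 m3
    (Psi : DSmor K n m2 m3) (Theta : DSmor K n m1 m2) : DSmor K n m1 m3 :=
  fun i x z => \sum_(y : Idx n m2 | inside i y) Theta i x y * Psi i y z.

(* The block Phi^{c:d}_{a:b} = pi_{c,d} o Phi o iota_{a,b} : I[a,b]^{m a b} ->
   I[c,d]^{m' c d}; its component at vertex i (a vertex of [a,b] and [c,d])
   is the (m a b) x (m' c d) matrix below. *)
Definition block (K : fieldType) n (m m' : nat -> nat -> nat) (Phi : DSmor K n m m')
    (a b c d : 'I_n.+1) (i : nat) (k : 'I_(m a b)) (l : 'I_(m' c d)) : K :=
  Phi i (mkIdx a b k) (mkIdx c d l).
Arguments block {K n m m'} Phi a b c d i k l.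

(* Main.v *)
Require Import Defs.
From HB Require Import structures.
From mathcomp Require Import all_boot all_order all_algebra.
From mathcomp Require Import zify.
Import GRing.Theory.
Local Open Scope ring_scope.
Set Implicit Arguments. Unset Strict Implicit.

Section Aux.
Variables (K : fieldType) (n : nat) (tau : nat -> bool) (m m' : nat -> nat -> nat).

Lemma idb_le (x : Idx n m) : (idb x <= n)%N.
Proof. rewrite /idb; have := ltn_ord (tag x).2; lia. Qed.

Lemma inside_of (x : Idx n m) t : (1 <= ida x)%N -> (ida x <= t)%N -> (t <= idb x)%N ->
  inside t x.
Proof. by move=> *; apply/and3P. Qed.

Lemma inside_of' (x : Idx n m') t : (1 <= ida x)%N -> (ida x <= t)%N -> (t <= idb x)%N ->
  inside t x.
Proof. by move=> *; apply/and3P. Qed.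

Lemma inside_E (x : Idx n m) t : inside t x ->
  [/\ (1 <= ida x)%N, (ida x <= t)%N & (t <= idb x)%N].
Proof. by case/and3P. Qed.

Lemma inside_E' (x : Idx n m') t : inside t x ->
  [/\ (1 <= ida x)%N, (ida x <= t)%N & (t <= idb x)%N].
Proof. by case/and3P. Qed.

Lemma notin1 (x : Idx n m) t : (t < ida x)%N -> inside t x = false.
Proof. by move=> h; apply/negbTE/and3P => -[_ ? _]; lia. Qed.
Lemma notin2 (x : Idx n m) t : (idb x < t)%N -> inside t x = false.
Proof. by move=> h; apply/negbTE/and3P => -[_ _ ?]; lia. Qed.
Lemma notin1' (x : Idx n m') t : (t < ida x)%N -> inside t x = false.
Proof. by move=> h; apply/negbTE/and3P => -[_ ? _]; lia. Qed.
Lemma notin2' (x : Idx n m') t : (idb x < t)%N -> inside t x = false.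
Proof. by move=> h; apply/negbTE/and3P => -[_ _ ?]; lia. Qed.

Lemma morph_entry (Phi : DSmor K n m m') : is_morphism tau Phi ->
  forall t x z, (1 <= t)%N -> (t < n)%N -> inside (asrc tau t) x -> inside (atgt tau t) z ->
  (if inside (atgt tau t) x then Phi (atgt tau t) x z else 0) =
  (if inside (asrc tau t) z then Phi (asrc tau t) x z else 0).
Proof.
move=> HM t x z h1 h2 hx hz; have := HM t h1 h2 x z hx hz.
rewrite big_mkcond /= (bigD1 x) //= big1 ?addr0; last first.
  by move=> y /negbTE ny; rewrite /dsArrow eq_sym ny mul0r if_same.
rewrite [RHS]big_mkcond /= (bigD1 z) //= big1 ?addr0; last first.
  by move=> y /negbTE ny; rewrite /dsArrow ny mulr0 if_same.
by rewrite /dsArrow !eqxx mul1r mulr1.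
Qed.

Lemma step (Phi : DSmor K n m m') : is_morphism tau Phi ->
  forall (x : Idx n m) (y : Idx n m') t, (1 <= ida x)%N -> (1 <= ida y)%N ->
  (ida x <= t)%N -> (ida y <= t)%N -> (t < idb x)%N -> (t < idb y)%N ->
  Phi t x y = Phi t.+1 x y.
Proof.
move=> HM x y t ax ay h1 h2 h3 h4.
have bx := idb_le x.
have t1 : (1 <= t)%N by lia.
have tn : (t < n)%N by lia.
have := morph_entry HM (x:=x) (z:=y) t1 tn.
have ix0 : inside t x by apply: inside_of; lia.
have ix1 : inside t.+1 x by apply: inside_of; lia.
have iy0 : inside t y by apply: inside_of'; lia.
have iy1 : inside t.+1 y by apply: inside_of'; lia.
rewrite /asrc /atgt; case: (tau t).
- by rewrite ix0 iy1 ix1 iy0 => /(_ isT isT) ->.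
- by rewrite ix0 iy1 ix1 iy0 => /(_ isT isT) ->.
Qed.

Lemma const (Phi : DSmor K n m m') : is_morphism tau Phi ->
  forall (x : Idx n m) (y : Idx n m') p s, (1 <= ida x)%N -> (1 <= ida y)%N ->
  (ida x <= p)%N -> (ida y <= p)%N -> (p <= s)%N -> (s <= idb x)%N -> (s <= idb y)%N ->
  Phi s x y = Phi p x y.
Proof.
move=> HM x y p s ax ay h1 h2 h3 h4 h5.
elim: s h3 h4 h5 => [|s IH] h3 h4 h5.
  by have -> : p = 0%N by lia.
case: (ltngtP p s.+1) h3 => // [lt _|-> _] //.
by rewrite -(step HM) ?IH //; lia.
Qed.

End Aux.

Lemma vanish (K : fieldType) (n : nat) (tau : nat -> bool) (m1 m2 m3 : nat -> nat -> nat)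
  (Theta : DSmor K n m1 m2) (Psi : DSmor K n m2 m3) :
  is_morphism tau Theta -> is_morphism tau Psi ->
  forall (x : Idx n m1) (y : Idx n m2) (z : Idx n m3) i,
  ida x = ida z -> idb x = idb z -> inside i x -> inside i y ->
  (ida y != ida x) || (idb y != idb x) -> Theta i x y * Psi i y z = 0.
Proof.
move=> HT HP x y z i eza ezb ix iy neq.
have [ax axi ixb] := inside_E ix.
have [ay ayi iyb] := inside_E iy.
have bxn := idb_le x; have byn := idb_le y.
have Tc : forall s s', (maxn (ida x) (ida y) <= s)%N -> (s <= s')%N ->
    (s' <= minn (idb x) (idb y))%N -> Theta s' x y = Theta s x y.
  move=> s s' h1 h2 h3; apply: (const HT); lia.
have Pc : forall s s', (maxn (ida x) (ida y) <= s)%N -> (s <= s')%N ->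
    (s' <= minn (idb x) (idb y))%N -> Psi s' y z = Psi s y z.
  move=> s s' h1 h2 h3; apply: (const HP); lia.
have inx : forall t, (ida x <= t)%N -> (t <= idb x)%N -> inside t x.
  by move=> t *; apply: inside_of; lia.
have iny : forall t, (ida y <= t)%N -> (t <= idb y)%N -> inside t y.
  by move=> t *; apply: inside_of; lia.
have inz : forall t, (ida x <= t)%N -> (t <= idb x)%N -> inside t z.
  by move=> t *; apply: inside_of; lia.
case: (ltngtP (ida y) (ida x)) => [lt|lt|eqa].
-
  have t1 : (1 <= (ida x).-1)%N by lia.
  have tn : ((ida x).-1 < n)%N by lia.
  have ta : ((ida x).-1).+1 = ida x by lia.
  have nx : inside (ida x).-1 x = false by apply: notin1; lia.
  have nz : inside (ida x).-1 z = false by apply: notin1; lia.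
  case Ht: (tau (ida x).-1).
  + have := morph_entry HP (x:=y) (z:=z) t1 tn.
    rewrite /asrc /atgt Ht ta nz !iny ?inz //; try lia.
    move=> /(_ isT isT) E.
    by rewrite (Pc (ida x) i) ?E ?mulr0 //; lia.
  + have := morph_entry HT (x:=x) (z:=y) t1 tn.
    rewrite /asrc /atgt Ht ta nx !iny ?inx //; try lia.
    move=> /(_ isT isT) E.
    by rewrite (Tc (ida x) i) -?E ?mul0r //; lia.
-
  have t1 : (1 <= (ida y).-1)%N by lia.
  have tn : ((ida y).-1 < n)%N by lia.
  have ta : ((ida y).-1).+1 = ida y by lia.
  have ny : inside (ida y).-1 y = false by apply: notin1; lia.
  case Ht: (tau (ida y).-1).
  + have := morph_entry HT (x:=x) (z:=y) t1 tn.
    rewrite /asrc /atgt Ht ta ny !iny ?inx //; try lia.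
    move=> /(_ isT isT) E.
    by rewrite (Tc (ida y) i) ?E ?mul0r //; lia.
  + have := morph_entry HP (x:=y) (z:=z) t1 tn.
    rewrite /asrc /atgt Ht ta ny !iny ?inz //; try lia.
    move=> /(_ isT isT) E.
    by rewrite (Pc (ida y) i) -?E ?mulr0 //; lia.
- have nb : idb y != idb x by move: neq; rewrite eqa eqxx.
  case: (ltngtP (idb y) (idb x)) => [lt|lt|eqb]; last by move: nb; rewrite eqb eqxx.
  +
    have t1 : (1 <= idb y)%N by lia.
    have tn : (idb y < n)%N by lia.
    have ny : inside (idb y).+1 y = false by apply: notin2; lia.
    case Ht: (tau (idb y)).
    * have := morph_entry HP (x:=y) (z:=z) t1 tn.
      rewrite /asrc /atgt Ht ny !iny ?inz //; try lia.
      move=> /(_ isT isT) E.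
      by rewrite -(Pc i (idb y)) -?E ?mulr0 //; lia.
    * have := morph_entry HT (x:=x) (z:=y) t1 tn.
      rewrite /asrc /atgt Ht ny !iny ?inx //; try lia.
      move=> /(_ isT isT) E.
      by rewrite -(Tc i (idb y)) ?E ?mul0r //; lia.
  +
    have t1 : (1 <= idb x)%N by lia.
    have tn : (idb x < n)%N by lia.
    have nx : inside (idb x).+1 x = false by apply: notin2; lia.
    have nz : inside (idb x).+1 z = false by apply: notin2; lia.
    case Ht: (tau (idb x)).
    * have := morph_entry HT (x:=x) (z:=y) t1 tn.
      rewrite /asrc /atgt Ht nx !iny ?inx //; try lia.
      move=> /(_ isT isT) E.
      by rewrite -(Tc i (idb x)) -?E ?mul0r //; lia.
    * have := morph_entry HP (x:=y) (z:=z) t1 tn.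
      rewrite /asrc /atgt Ht nz !iny ?inz //; try lia.
      move=> /(_ isT isT) E.
      by rewrite -(Pc i (idb x)) ?E ?mulr0 //; lia.
Qed.

Theorem mainTheorem6 (K : fieldType) (n : nat) (tau : nat -> bool)
    (m1 m2 m3 : nat -> nat -> nat)
    (Theta : DSmor K n m1 m2) (Psi : DSmor K n m2 m3) :
  (1 <= n)%N ->
  is_morphism tau Theta -> is_morphism tau Psi ->
  forall a b : 'I_n.+1, (1 <= a)%N -> (a <= b)%N ->
  forall i : nat, (a <= i)%N -> (i <= b)%N ->
  forall (k : 'I_(m1 a b)) (l : 'I_(m3 a b)),
    block (mcomp Psi Theta) a b a b i k l
    = \sum_(j < m2 a b) block Psi a b a b i j l * block Theta a b a b i k j.
Proof.
move=> n1 HT HP a b a1 ab i ai ib k l.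
rewrite /block /mcomp.
set G := fun y : Idx n m2 => Theta i (mkIdx a b k) y * Psi i y (mkIdx a b l).
have -> : \sum_(y | inside i y) G y = \sum_(y | inside i y && (tag y == (a, b))) G y
   + \sum_(y | inside i y && ~~ (tag y == (a, b))) G y by exact: bigID.
rewrite [X in _ + X]big1 ?addr0; last first.
  move=> y /andP[iy ne]; apply: (vanish HT HP) => //.
    apply: inside_of => /=; rewrite /ida /idb /=; lia.
  move: ne; case: y {iy} => [[c d] j] /=.
  by rewrite /ida /idb /= xpair_eqE negb_and !val_eqE.
transitivity (\sum_(p : 'I_n.+1 * 'I_n.+1 | p == (a, b))
    \sum_(j : 'I_(m2 p.1 p.2) | true)
      Theta i (mkIdx a b k) (@Tagged _ p (fun p => 'I_(m2 p.1 p.2)) j) *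
      Psi i (@Tagged _ p (fun p => 'I_(m2 p.1 p.2)) j) (mkIdx a b l)).
  rewrite sig_big_dep /=.
  apply: eq_big => [[[c d] j]|[[c d] j] _] //=.
  rewrite andbT; case E: ((c, d) == (a, b)) => //=; last by rewrite andbF.
  move: E; rewrite xpair_eqE => /andP[/eqP ec /eqP ed].
  by rewrite andbT; apply: inside_of; rewrite /ida /idb /= ?ec ?ed; lia.
rewrite big_pred1_eq; apply: eq_bigr => j _; exact: mulrC.
Qed.
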